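(* In the MDPUC setting of the context, assume Ergodicity, and let $\beta(z)=\mathbb E[\pi_e(A\mid S,U)/\pi_b(A\mid S,U)\mid Z=z]$. Then the stationary density ratio $d(S)$ is the unique function satisfying the moment condition $\mathbb E[d(S)]=1$ together with the conditional moment restriction $d(S')=\mathbb E_b[d(S)\beta(Z)\mid S']$ for all $S'$.
   Context: MDPUC: finite state space $\mathcal S$, actions $[m]$, confounder space $\mathcal U$, transitions $P_T(s'\mid s,a,u)$; at each time step an iid confounder $U_t$ is drawn, $A_t\sim\pi(\cdot\mid S_t,U_t)$, $S_{t+1}\sim P_T(\cdot\mid S_t,A_t,U_t)$. $S'$ is the successor state of $S$, $Z=(S,A,S')$, $X=(Z,U)$. Behavior policy $\pi_b(a\mid s,u)$, evaluation policy $\pi_e(a\mid s,u)$. Ergodicity: the chain of $X$ values under each of $\pi_b,\pi_e$ is ergodic, and under $\pi_b$ it is stationary. $\mathbb E_b$ (and unsubscripted $\mathbb E$) is expectation under the stationary distribution of $\pi_b$; $d(S)$ is the stationary density ratio of $S$: $\mathbb E_e[g(S)]=\mathbb E_b[d(S)g(S)]$ for all measurable $g$. *)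

(* Defs.v *)
From HB Require Import structures.
From mathcomp Require Import all_boot all_order all_algebra.
From mathcomp Require Import all_classical all_reals all_analysis.
Set Implicit Arguments. Unset Strict Implicit. Unset Printing Implicit Defensive.
Import Order.TTheory GRing.Theory Num.Theory.
Local Open Scope ring_scope.

(* MDPUC with finite state space S, actions 'I_m, confounder space T
   (an arbitrary measurable space) with confounder law P (the iid law of U_t).
   A policy pi s a u = pi(a | s, u); a transition PT s a u s' = P_T(s' | s,a,u). *)

Section MDPUC.
Context {R : realType} {d : measure_display} {T : measurableType d}
  (P : probability T R) {S : finType} {m : nat}.

Definition is_policy (pi : S -> 'I_m -> T -> R) : Prop :=
  [/\ forall s a u, 0 <= pi s a u,
      forall s u, \sum_(a < m) pi s a u = 1
    & forall s a, measurable_fun setT (pi s a)].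

Definition is_transition (PT : S -> 'I_m -> T -> S -> R) : Prop :=
  [/\ forall s a u s', 0 <= PT s a u s',
      forall s a u, \sum_(s' : S) PT s a u s' = 1
    & forall s a s', measurable_fun setT (fun u => PT s a u s')].

Variable PT : S -> 'I_m -> T -> S -> R.

Definition Kmat (pi : S -> 'I_m -> T -> R) (s s' : S) : R :=
  Rintegral P setT (fun u => \sum_(a < m) pi s a u * PT s a u s').

Fixpoint Kpow (pi : S -> 'I_m -> T -> R) (n : nat) (s s' : S) : R :=
  match n with
  | 0 => (s == s')%:R
  | n.+1 => \sum_(t : S) Kpow pi n s t * Kmat pi t s'
  end.

(* Ergodicity of the chain under pi: the (finite-state) chain is irreducible
   and aperiodic, i.e. some power of its transition matrix is entrywise > 0. *)
Definition ergodic (pi : S -> 'I_m -> T -> R) : Prop :=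
  exists n : nat, forall s s' : S, 0 < Kpow pi n s s'.

Definition stationary (pi : S -> 'I_m -> T -> R) (mu : S -> R) : Prop :=
  [/\ forall s, 0 <= mu s, \sum_(s : S) mu s = 1
    & forall s' : S, \sum_(s : S) mu s * Kmat pi s s' = mu s'].

(* Expectation of f(X), X = (S, A, S', U), under the stationary law of the
   X-chain for policy pi whose state marginal is mu:
   S ~ mu, U ~ P, A ~ pi(.|S,U), S' ~ P_T(.|S,A,U). *)
Definition EX (pi : S -> 'I_m -> T -> R) (mu : S -> R)
  (f : S -> 'I_m -> S -> T -> R) : R :=
  \sum_(s : S) \sum_(a < m) \sum_(s' : S)
     mu s * Rintegral P setT (fun u => pi s a u * PT s a u s' * f s a s' u).

(* conditional expectation given a discrete event E of positive probability
   (ratio E[Y 1_E] / P(E); the value on null events is irrelevant) *)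
Definition cond_EX pi mu (Y : S -> 'I_m -> S -> T -> R)
  (E : S -> 'I_m -> S -> T -> bool) : R :=
  EX pi mu (fun s a s' u => Y s a s' u * (E s a s' u)%:R)
  / EX pi mu (fun s a s' u => (E s a s' u)%:R).

Variables (pib pie : S -> 'I_m -> T -> R) (mub mue : S -> R).

(* beta(z) = E_b[ pi_e(A|S,U) / pi_b(A|S,U) | Z = z ],  z = (s, a, s') *)
Definition beta (z : S * 'I_m * S) : R :=
  cond_EX pib mub (fun s a _ u => pie s a u / pib s a u)
    (fun s a s' _ => (s, a, s') == z).

Definition density_ratio (dr : S -> R) : Prop :=
  forall g : S -> R,
    EX pie mue (fun s _ _ _ => g s) = EX pib mub (fun s _ _ _ => dr s * g s).

Definition moment_cond (h : S -> R) : Prop :=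
  EX pib mub (fun s _ _ _ => h s) = 1.

Definition cmr (h : S -> R) : Prop :=
  forall s0 : S,
    h s0 = cond_EX pib mub (fun s a s' _ => h s * beta (s, a, s'))
             (fun _ _ s' _ => s' == s0).

End MDPUC.

(* Main.v *)
Require Import Defs.
From HB Require Import structures.
From mathcomp Require Import all_boot all_order all_algebra.
From mathcomp Require Import all_classical all_reals all_analysis.
From mathcomp Require Import measurable_realfun ring.
Import Order.TTheory GRing.Theory Num.Theory.
Local Open Scope ring_scope.
Set Implicit Arguments. Unset Strict Implicit.

Lemma int_bnd (R : realType) (d : measure_display) (T : measurableType d)
  (P : probability T R) (f : T -> R) (M : R) :
  measurable_fun setT f -> (forall x, `|f x| <= M) ->
  P.-integrable setT (EFin \o f).
Proof.
move=> mf fM; apply/integrableP; split; first exact/measurable_EFinP.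
apply: (@le_lt_trans _ _ (\int[P]_(x in setT) (cst M%:E) x))%E.
  apply: ge0_le_integral => //.
  all: try (by do 2 apply: measurableT_comp => //).
  all: try (by move=> x _; rewrite /= lee_fin (le_trans _ (fM x))).
by rewrite integral_cst //= probability_setT mule1 ltry.
Qed.

Lemma zero_transfer (R : realType) (d : measure_display) (T : measurableType d)
  (P : probability T R) (f g : T -> R) :
  measurable_fun setT f -> measurable_fun setT g ->
  (forall x, 0 <= f x) -> (forall x, 0 <= g x) ->
  (forall x, 0 < g x -> 0 < f x) ->
  P.-integrable setT (EFin \o f) ->
  Rintegral P setT f = 0 -> Rintegral P setT g = 0.
Proof.
move=> mf mg f0 g0 gf intf.
rewrite /Rintegral => /eqP; rewrite fine_eq0; last exact: integrable_fin_num.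
move=> /eqP If0.
have : (\int[P]_(x in setT) `|(f x)%:E| = 0)%E.
  by rewrite -If0; apply: eq_integral => x _; rewrite gee0_abs // lee_fin.
have mfE : measurable_fun setT (EFin \o f) by exact/measurable_EFinP.
move/(ae_eq_integral_abs P measurableT mfE) => Hae.
have Hg : ae_eq P setT (EFin \o g) (cst 0%E).
  apply: filterS Hae => x /= H _; have := H I; move=> [] fx0.
  apply/eqP; rewrite eqe; apply/negPn/negP => gx.
  have : 0 < g x by rewrite lt_def gx g0.
  by move/gf; rewrite fx0 ltxx.
rewrite (ae_eq_integral (cst 0%E)) //.
- by rewrite integral0.
- exact/measurable_EFinP.
Qed.

Lemma Rint_sum (R : realType) (d : measure_display) (T : measurableType d)
  (P : probability T R) (I : Type) (s : seq I) (F : I -> T -> R) :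
  (forall i, P.-integrable setT (EFin \o F i)) ->
  P.-integrable setT (EFin \o (fun u => \sum_(i <- s) F i u)) /\
  Rintegral P setT (fun u => \sum_(i <- s) F i u) = \sum_(i <- s) Rintegral P setT (F i).
Proof.
move=> iF; elim: s => [|i s [IH1 IH2]].
  rewrite big_nil; split.
    apply: (eq_integrable measurableT (cst 0%E)); first by move=> x _; rewrite /= big_nil.
    exact: integrable0.
  rewrite (@eq_Rintegral _ _ _ _ _ (fun _ => 0)); last by move=> x _; rewrite big_nil.
  by rewrite Rintegral_cst // mul0r.
split.
  apply: (eq_integrable measurableT ((EFin \o F i) \+ (EFin \o (fun u => (\sum_(i <- s) F i u)%R)))%E).
    by move=> x _; rewrite /= big_cons.
  exact: integrableD.
rewrite big_cons -IH2 -RintegralD //.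
by apply: eq_Rintegral => x _; rewrite big_cons.
Qed.

Definition qx (R : realType) (d : measure_display) (T : measurableType d)
  (P : probability T R) (S : finType) (m : nat)
  (PT : S -> 'I_m -> T -> S -> R) (pi : S -> 'I_m -> T -> R) s a s' :=
  Rintegral P setT (fun u => pi s a u * PT s a u s').

Lemma pol_le1 (R : realType) (d : measure_display) (T : measurableType d)
  (S : finType) (m : nat) (pi : S -> 'I_m -> T -> R) s a u :
  is_policy pi -> pi s a u <= 1.
Proof.
case=> p0 p1 _; rewrite -(p1 s u) (bigD1 a) //= lerDl.
by apply: sumr_ge0 => i _.
Qed.

Lemma tr_le1 (R : realType) (d : measure_display) (T : measurableType d)
  (S : finType) (m : nat) (PT : S -> 'I_m -> T -> S -> R) s a u s' :
  is_transition PT -> PT s a u s' <= 1.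
Proof.
case=> p0 p1 _; rewrite -(p1 s a u) (bigD1 s') //= lerDl.
by apply: sumr_ge0 => i _.
Qed.

Lemma q_int (R : realType) (d : measure_display) (T : measurableType d)
  (P : probability T R) (S : finType) (m : nat)
  (PT : S -> 'I_m -> T -> S -> R) (pi : S -> 'I_m -> T -> R) s a s' :
  is_transition PT -> is_policy pi ->
  P.-integrable setT (EFin \o (fun u => pi s a u * PT s a u s')).
Proof.
move=> hT hp; apply: (@int_bnd _ _ _ _ _ 1).
  by apply: measurable_funM; [case: hp | case: hT].
move=> u; have p0 : 0 <= pi s a u by case: hp.
have t0 : 0 <= PT s a u s' by case: hT.
rewrite ger0_norm ?mulr_ge0 //.
by rewrite -(mulr1 1) ler_pM // ?pol_le1 ?tr_le1.
Qed.

Lemma EX_lin (R : realType) (d : measure_display) (T : measurableType d)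
  (P : probability T R) (S : finType) (m : nat)
  (PT : S -> 'I_m -> T -> S -> R) (pi : S -> 'I_m -> T -> R) (mu : S -> R)
  (c : S -> 'I_m -> S -> R) :
  is_transition PT -> is_policy pi ->
  EX P PT pi mu (fun s a s' _ => c s a s') =
  \sum_s \sum_(a < m) \sum_(s' : S) mu s * (qx P PT pi s a s' * c s a s').
Proof.
move=> hT hp; rewrite /EX; apply: eq_bigr => s _; apply: eq_bigr => a _.
apply: eq_bigr => s' _; congr (_ * _).
by rewrite /qx RintegralZr //; exact: q_int.
Qed.

Lemma K_q (R : realType) (d : measure_display) (T : measurableType d)
  (P : probability T R) (S : finType) (m : nat)
  (PT : S -> 'I_m -> T -> S -> R) (pi : S -> 'I_m -> T -> R) s s' :
  is_transition PT -> is_policy pi ->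
  Kmat P PT pi s s' = \sum_(a < m) qx P PT pi s a s'.
Proof.
move=> hT hp; rewrite /Kmat.
have [_ ->] := @Rint_sum _ _ _ P _ (index_enum 'I_m) (fun a u => pi s a u * PT s a u s') (fun a => q_int P s a s' hT hp).
by [].
Qed.

Lemma K_row (R : realType) (d : measure_display) (T : measurableType d)
  (P : probability T R) (S : finType) (m : nat)
  (PT : S -> 'I_m -> T -> S -> R) (pi : S -> 'I_m -> T -> R) s :
  is_transition PT -> is_policy pi ->
  \sum_(s' : S) Kmat P PT pi s s' = 1.
Proof.
move=> hT hp.
have iK : forall s', P.-integrable setT (EFin \o (fun u => \sum_(a < m) pi s a u * PT s a u s')).
  move=> s'.
  exact: (proj1 (@Rint_sum _ _ _ P _ (index_enum 'I_m) (fun a u => pi s a u * PT s a u s') (fun a => q_int P s a s' hT hp))).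
have [_ H] := @Rint_sum _ _ _ P _ (index_enum S) (fun s' u => \sum_(a < m) pi s a u * PT s a u s') iK.
rewrite /Kmat -H (@eq_Rintegral _ _ _ _ _ (fun _ => 1)).
  rewrite Rintegral_cst // mul1r; apply: (@eq_trans _ _ (fine 1%E)) => //; congr fine; exact: probability_setT.
move=> u _; rewrite exchange_big /=.
rewrite (eq_bigr (fun a => pi s a u)); first by case: hp => _ -> _.
move=> a _; rewrite -mulr_sumr.
by case: hT => _ -> _; rewrite mulr1.
Qed.

Lemma sum_ind1 (R : realType) (I : finType) (F : I -> R) j :
  \sum_i F i * (i == j)%:R = F j.
Proof.
rewrite (bigD1 j) //= eqxx mulr1 big1 ?addr0 // => i /negbTE ->.
by rewrite mulr0.
Qed.

Lemma sum_ind3 (R : realType) (S : finType) (m : nat) (F : S -> 'I_m -> S -> R) s a s' :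
  \sum_s1 \sum_(a1 < m) \sum_(s1' : S) F s1 a1 s1' * ((s1, a1, s1') == (s, a, s'))%:R
  = F s a s'.
Proof.
rewrite (bigD1 s) //= [X in _ + X]big1 ?addr0; last first.
  move=> s1 /negbTE Hs; apply: big1 => a1 _; apply: big1 => s1' _.
  by rewrite !xpair_eqE Hs /= mulr0.
rewrite (bigD1 a) //= [X in _ + X]big1 ?addr0; last first.
  move=> a1 /negbTE Ha; apply: big1 => s1' _.
  by rewrite !xpair_eqE Ha /= andbF mulr0.
rewrite -[RHS](sum_ind1 (F s a) s'); apply: eq_bigr => s1' _.
by rewrite !xpair_eqE !eqxx.
Qed.

Lemma EX_ratio (R : realType) (d : measure_display) (T : measurableType d)
  (P : probability T R) (S : finType) (m : nat)
  (PT : S -> 'I_m -> T -> S -> R) (pib pie : S -> 'I_m -> T -> R) (mu : S -> R)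
  (c : S -> 'I_m -> S -> R) :
  is_transition PT -> is_policy pib -> is_policy pie ->
  (forall s a u, 0 < pie s a u -> 0 < pib s a u) ->
  EX P PT pib mu (fun s a s' u => pie s a u / pib s a u * c s a s') =
  \sum_s \sum_(a < m) \sum_(s' : S) mu s * (qx P PT pie s a s' * c s a s').
Proof.
move=> hT hb he hpos; rewrite /EX; apply: eq_bigr => s _; apply: eq_bigr => a _.
apply: eq_bigr => s' _; congr (_ * _).
rewrite /qx -RintegralZr //; last exact: q_int.
apply: eq_Rintegral => u _.
have [E|nz] := eqVneq (pib s a u) 0.
  have E2 : pie s a u = 0.
    apply/eqP; rewrite eq_le; case: he => -> _ _; rewrite andbT.
    by rewrite leNgt; apply/negP => /hpos; rewrite E ltxx.
  by rewrite E E2 !mul0r.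
by field.
Qed.

Lemma q_zero (R : realType) (d : measure_display) (T : measurableType d)
  (P : probability T R) (S : finType) (m : nat)
  (PT : S -> 'I_m -> T -> S -> R) (pib pie : S -> 'I_m -> T -> R) s a s' :
  is_transition PT -> is_policy pib -> is_policy pie ->
  (forall s a u, 0 < pie s a u -> 0 < pib s a u) ->
  qx P PT pib s a s' = 0 -> qx P PT pie s a s' = 0.
Proof.
move=> hT hb he hpos; apply: zero_transfer.
- by apply: measurable_funM; [case: hb | case: hT].
- by apply: measurable_funM; [case: he | case: hT].
- by move=> u; apply: mulr_ge0; [case: hb | case: hT].
- by move=> u; apply: mulr_ge0; [case: he | case: hT].
- move=> u gx.
  have t0 : 0 <= PT s a u s' by case: hT.
  have e0 : 0 <= pie s a u by case: he.
  have tp : 0 < PT s a u s'.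
    rewrite lt_def t0 andbT; apply/eqP => t00; move: gx; by rewrite t00 mulr0 ltxx.
  move: gx; rewrite pmulr_lgt0 // => /hpos bp.
  by rewrite pmulr_lgt0.
- exact: q_int.
Qed.

Lemma EX_s (R : realType) (d : measure_display) (T : measurableType d)
  (P : probability T R) (S : finType) (m : nat)
  (PT : S -> 'I_m -> T -> S -> R) (pi : S -> 'I_m -> T -> R) (mu : S -> R)
  (g : S -> R) :
  is_transition PT -> is_policy pi ->
  EX P PT pi mu (fun s _ _ _ => g s) = \sum_s mu s * g s.
Proof.
move=> hT hp; rewrite (EX_lin P mu (fun s _ _ => g s)) //.
apply: eq_bigr => s _.
rewrite (eq_bigr (fun a => mu s * g s * \sum_(s' : S) qx P PT pi s a s')); last first.
  move=> a _; rewrite mulr_sumr; apply: eq_bigr => s' _; by ring.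
rewrite -mulr_sumr exchange_big /=.
rewrite (eq_bigr (fun s' => Kmat P PT pi s s')); last by move=> s' _; rewrite K_q.
by rewrite K_row // mulr1.
Qed.

Lemma beta_eq (R : realType) (d : measure_display) (T : measurableType d)
  (P : probability T R) (S : finType) (m : nat)
  (PT : S -> 'I_m -> T -> S -> R) (pib pie : S -> 'I_m -> T -> R) (mub : S -> R) s a s' :
  is_transition PT -> is_policy pib -> is_policy pie ->
  (forall s a u, 0 < pie s a u -> 0 < pib s a u) ->
  beta P PT pib pie mub (s, a, s') =
  (mub s * qx P PT pie s a s') / (mub s * qx P PT pib s a s').
Proof.
move=> hT hb he hpos; rewrite /beta /cond_EX.
rewrite (EX_ratio P mub (fun s1 a1 s1' => ((s1, a1, s1') == (s, a, s'))%:R)) //.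
rewrite (EX_lin P mub (fun s1 a1 s1' => ((s1, a1, s1') == (s, a, s'))%:R)) //.
under eq_bigr do under eq_bigr do under eq_bigr do rewrite mulrA.
rewrite (sum_ind3 (fun s1 a1 s1' => mub s1 * qx P PT pie s1 a1 s1')).
under eq_bigr do under eq_bigr do under eq_bigr do rewrite mulrA.
by rewrite (sum_ind3 (fun s1 a1 s1' => mub s1 * qx P PT pib s1 a1 s1')).
Qed.

Lemma aux (R : realType) (x y z : R) : x != 0 -> x * z * (y / x) = z * y.
Proof. by move=> hx; rewrite mulrC mulrA divfK // mulrC. Qed.

Lemma cmr_eq (R : realType) (d : measure_display) (T : measurableType d)
  (P : probability T R) (S : finType) (m : nat)
  (PT : S -> 'I_m -> T -> S -> R) (pib pie : S -> 'I_m -> T -> R) (mub : S -> R)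
  (h : S -> R) s0 :
  is_transition PT -> is_policy pib -> is_policy pie ->
  (forall s a u, 0 < pie s a u -> 0 < pib s a u) ->
  stationary P PT pib mub ->
  cond_EX P PT pib mub (fun s a s' _ => h s * beta P PT pib pie mub (s, a, s'))
    (fun _ _ s' _ => s' == s0) =
  (\sum_s mub s * h s * Kmat P PT pie s s0) / mub s0.
Proof.
move=> hT hb he hpos [_ _ hst]; rewrite /cond_EX.
rewrite (EX_lin P mub (fun s a s' => h s * beta P PT pib pie mub (s, a, s') * (s' == s0)%:R)) //.
rewrite (EX_lin P mub (fun s a s' => (s' == s0)%:R)) //.
congr (_ / _).
  apply: eq_bigr => s _.
  rewrite K_q // mulr_sumr; apply: eq_bigr => a _.
  rewrite (eq_bigr (fun s' => (mub s * qx P PT pib s a s' * h s *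
     ((mub s * qx P PT pie s a s') / (mub s * qx P PT pib s a s'))) * (s' == s0)%:R)); last first.
    by move=> s' _; rewrite beta_eq // !mulrA.
  rewrite sum_ind1.
  have [E|nz] := eqVneq (mub s * qx P PT pib s a s0) 0.
    have E2 : mub s * qx P PT pie s a s0 = 0.
      move/eqP: E; rewrite mulf_eq0 => /orP[/eqP ->|/eqP E]; first by rewrite mul0r.
      by rewrite (q_zero hT hb he hpos E) mulr0.
    by rewrite E2 mul0r mulr0 -mulrA [h s * _]mulrC mulrA E2 mul0r.
  by rewrite aux // mulrCA mulrA.
rewrite -hst; apply: eq_bigr => s _.
rewrite K_q // mulr_sumr; apply: eq_bigr => a _.
under eq_bigr do rewrite !mulrA.
by rewrite (sum_ind1 (fun s' => mub s * qx P PT pib s a s')).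
Qed.

Lemma inv_pow (R : realType) (d : measure_display) (T : measurableType d)
  (P : probability T R) (S : finType) (m : nat)
  (PT : S -> 'I_m -> T -> S -> R) (pi : S -> 'I_m -> T -> R) (x : S -> R) :
  (forall s', \sum_s x s * Kmat P PT pi s s' = x s') ->
  forall n s', \sum_t x t * Kpow P PT pi n t s' = x s'.
Proof.
move=> H; elim=> [|n IH] s' /=; first exact: sum_ind1.
under eq_bigr do rewrite mulr_sumr.
rewrite exchange_big /= -[RHS]H; apply: eq_bigr => r _.
rewrite -IH mulr_suml; apply: eq_bigr => t _; by rewrite mulrA.
Qed.

Lemma pos_stat (R : realType) (d : measure_display) (T : measurableType d)
  (P : probability T R) (S : finType) (m : nat)
  (PT : S -> 'I_m -> T -> S -> R) (pi : S -> 'I_m -> T -> R) (mu : S -> R) :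
  ergodic P PT pi -> stationary P PT pi mu -> forall s, 0 < mu s.
Proof.
move=> [n Hn] [mu0 mu1 hst] s; rewrite -(inv_pow hst n s).
have ge0 : forall t, 0 <= mu t * Kpow P PT pi n t s.
  by move=> t; rewrite mulr_ge0 // ltW.
rewrite lt_def sumr_ge0 // andbT; apply/eqP => /psumr_eq0P H.
have : \sum_t mu t = 0.
  apply: big1 => t _; have /eqP := H (fun i _ => ge0 i) t isT.
  by rewrite mulf_eq0 (gt_eqF (Hn t s)) orbF => /eqP.
by rewrite mu1 => /eqP; rewrite oner_eq0.
Qed.

Lemma uniq_inv (R : realType) (d : measure_display) (T : measurableType d)
  (P : probability T R) (S : finType) (m : nat)
  (PT : S -> 'I_m -> T -> S -> R) (pi : S -> 'I_m -> T -> R) (mu w : S -> R) :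
  ergodic P PT pi -> stationary P PT pi mu ->
  \sum_s w s = 1 -> (forall s', \sum_s w s * Kmat P PT pi s s' = w s') ->
  w = mu.
Proof.
move=> erg st w1 winv; have mup := pos_stat erg st.
case: st => [mu0 mu1 hst]; case: erg => n Hn.
case: (pickP (fun _ : S => true)) => [i0 _|H0]; last first.
  by move: w1; rewrite big_pred0 // => /eqP; rewrite eq_sym oner_eq0.
case: (@arg_minP _ _ S i0 xpredT (fun i => w i / mu i) isT) => k _ kmin.
set c := w k / mu k.
set v := fun i => w i - c * mu i.
have v0 : forall i, 0 <= v i.
  move=> i; rewrite /v subr_ge0 -ler_pdivlMr //; exact: kmin.
have vk : v k = 0 by rewrite /v /c divfK ?subrr // gt_eqF.
have vinv : forall s', \sum_s v s * Kmat P PT pi s s' = v s'.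
  move=> s'; rewrite /v.
  under eq_bigr do rewrite mulrBl.
  rewrite sumrB -winv -hst mulr_sumr; congr (_ - _).
  by apply: eq_bigr => s _; rewrite mulrA.
have vall : forall t, v t = 0.
  move=> t; have := inv_pow vinv n k; rewrite vk => /eqP.
  rewrite psumr_eq0; last by move=> i _; rewrite mulr_ge0 // ltW.
  move=> /allP /(_ t (mem_index_enum t)) /=.
  by rewrite mulf_eq0 (gt_eqF (Hn t k)) orbF => /eqP.
have wc : forall t, w t = c * mu t by move=> t; apply/eqP; rewrite -subr_eq0; apply/eqP; exact: vall.
have c1 : c = 1.
  by move: w1; under eq_bigr do rewrite wc; rewrite -mulr_sumr mu1 mulr1.
by apply: funext => t; rewrite wc c1 mul1r.
Qed.

Unset Implicit Arguments.
Theorem theorem4 (R : realType) (d : measure_display) (T : measurableType d)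
  (P : probability T R) (S : finType) (m : nat)
  (PT : S -> 'I_m -> T -> S -> R) (pib pie : S -> 'I_m -> T -> R)
  (mub mue : S -> R) (dr : S -> R) :
  is_transition PT -> is_policy pib -> is_policy pie ->
  (forall s a u, 0 < pie s a u -> 0 < pib s a u) ->
  ergodic P PT pib -> ergodic P PT pie ->
  stationary P PT pib mub -> stationary P PT pie mue ->
  density_ratio P PT pib pie mub mue dr ->
  (moment_cond P PT pib mub dr /\ cmr P PT pib pie mub dr) /\
  (forall h : S -> R,
     moment_cond P PT pib mub h -> cmr P PT pib pie mub h -> h = dr).
Proof.
move=> hT hb he hpos ergb erge stb ste dens.
have mubp := pos_stat ergb stb.
have mue_eq : forall t, mue t = mub t * dr t.
  move=> t; have := dens (fun s => (s == t)%:R).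
  rewrite (EX_s P mue (fun s => (s == t)%:R)) // (EX_s P mub (fun s => dr s * (s == t)%:R)) //.
  rewrite sum_ind1; under eq_bigr do rewrite mulrA.
  by rewrite sum_ind1.
have drE : forall t, dr t = mue t / mub t.
  by move=> t; rewrite mue_eq [mub t * _]mulrC mulfK // gt_eqF.
have [_ mue1 hste] := ste.
split; [split|].
- rewrite /moment_cond (EX_s P mub dr) //.
  by under eq_bigr do rewrite -mue_eq.
- move=> s0; rewrite cmr_eq //.
  under eq_bigr do rewrite -mue_eq.
  by rewrite hste drE.
- move=> h hm hc.
  have w1 : \sum_s mub s * h s = 1 by rewrite -hm /moment_cond (EX_s P mub h).
  have winv : forall s', \sum_s (fun s => mub s * h s) s * Kmat P PT pie s s' = mub s' * h s'.
    move=> s'; rewrite (hc s') cmr_eq // mulrC divfK ?gt_eqF //.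
  have := uniq_inv erge ste w1 winv => wE.
  apply: funext => t; rewrite drE.
  have := congr1 (fun f => f t) wE => /= <-.
  by rewrite [mub t * _]mulrC mulfK // gt_eqF.
Qed.
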